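(* For any $t\in[T]$ and $k,n,m\in[N]$, $$\Pr(x_o=n,\;x_t=m\mid x_{T+1}=k)=q^{(k)}_tP_{n,m}\mu_m+(1-q^{(k)}_t)\mu_n\mu_m.$$
   Context: Let $N,T$ be positive integers. Let $\mathbf{P}\in\mathbb{R}^{N\times N}$ have nonnegative entries with columns summing to $1$, and let $\boldsymbol\mu\in\mathbb{R}^N$ be a probability vector with $\mathbf{P}\boldsymbol\mu=\boldsymbol\mu$. Let $\mathbf{q}^{(1)},\dots,\mathbf{q}^{(N)}$ be probability vectors in $\mathbb{R}^T$. Random variables: $x_1,\dots,x_{T+1}$ i.i.d. with law $\boldsymbol\mu$ on $[N]$, and $x_o\in[N]$ with $\Pr(x_o=n\mid x_{T+1}=k,x_1,\dots,x_T)=\sum_{s=1}^Tq^{(k)}_sP_{n,x_s}$. *)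

(* Defs.v *)
From HB Require Import structures.
From mathcomp Require Import all_boot all_order all_algebra.
Set Implicit Arguments. Unset Strict Implicit. Unset Printing Implicit Defensive.
Import Order.TTheory GRing.Theory Num.Theory.
Local Open Scope ring_scope.

(* [N] is 'I_N, [T] is 'I_T (0-based indices).
   P : 'M_N with P n m = P_{n,m}; mu : 'cV_N; q k s = q^{(k)}_s. *)

Definition col_stochastic (R : realFieldType) (N : nat) (P : 'M[R]_N) : Prop :=
  (forall n m, 0 <= P n m) /\ (forall m, \sum_(n < N) P n m = 1).

Definition prob_cvec (R : realFieldType) (N : nat) (mu : 'cV[R]_N) : Prop :=
  (forall n, 0 <= mu n 0) /\ \sum_(n < N) mu n 0 = 1.

Definition prob_fun (R : realFieldType) (T : nat) (v : 'I_T -> R) : Prop :=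
  (forall s, 0 <= v s) /\ \sum_(s < T) v s = 1.

(* Conditional joint law of (x_1,...,x_T, x_o) given x_{T+1} = k:
   x_1..x_T are i.i.d. with law mu (independent of x_{T+1}), and
   Pr(x_o = n | x_{T+1}=k, x_1..x_T = y) = \sum_s q^{(k)}_s P_{n, y_s}. *)
Definition cond_law (R : realFieldType) (N T : nat) (P : 'M[R]_N)
  (mu : 'cV[R]_N) (q : 'I_N -> 'I_T -> R) (k : 'I_N)
  (y : {ffun 'I_T -> 'I_N}) (n : 'I_N) : R :=
  (\prod_(i < T) mu (y i) 0) * (\sum_(s < T) q k s * P n (y s)).

Definition cond_prob_xo_xt (R : realFieldType) (N T : nat) (P : 'M[R]_N)
  (mu : 'cV[R]_N) (q : 'I_N -> 'I_T -> R) (k n : 'I_N) (t : 'I_T) (m : 'I_N)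
  : R :=
  \sum_(y : {ffun 'I_T -> 'I_N} | y t == m) cond_law P mu q k y n.

(* Main.v *)
Require Import Defs.
From HB Require Import structures.
From mathcomp Require Import all_boot all_order all_algebra.
From mathcomp Require Import ring.
Import Order.TTheory GRing.Theory Num.Theory.
Local Open Scope ring_scope.

Lemma prod_if1 (R : comNzRingType) (I : finType) (s : I) (a : I -> R) :
  \prod_(i : I) (if i == s then a i else 1) = a s.
Proof. by rewrite -big_mkcond big_pred1_eq. Qed.

Theorem lemmaB1 (R : realFieldType) (N T : nat) (P : 'M[R]_N)
  (mu : 'cV[R]_N) (q : 'I_N -> 'I_T -> R)
  (hN : (0 < N)%N) (hT : (0 < T)%N)
  (hP : col_stochastic P) (hmu : prob_cvec mu) (hPmu : P *m mu = mu)
  (hq : forall k, prob_fun (q k))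
  (t : 'I_T) (k n m : 'I_N) :
  cond_prob_xo_xt P mu q k n t m
  = q k t * P n m * mu m 0 + (1 - q k t) * mu n 0 * mu m 0.
Proof.
pose G (s i : 'I_T) (j : 'I_N) : R := mu j 0 * (if i == s then P n j else 1)
   * (if i == t then (j == m)%:R else 1).
have E1 : cond_prob_xo_xt P mu q k n t m =
   \sum_(s < T) q k s * \prod_(i < T) \sum_(j < N) G s i j.
  rewrite /cond_prob_xo_xt big_mkcond /=.
  rewrite (eq_bigr (fun y : {ffun 'I_T -> 'I_N} => \sum_(s < T) q k s * \prod_i G s i (y i))).
    rewrite exchange_big /=; apply: eq_bigr => s _. by rewrite -mulr_sumr bigA_distr_bigA.
  move=> y _.
  rewrite (eq_bigr (fun s => (y t == m)%:R * (\prod_(i < T) mu (y i) 0 * (q k s * P n (y s))))); last first.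
    move=> s _; rewrite /G !big_split /= (@prod_if1 _ _ s (fun i => P n (y i))) (@prod_if1 _ _ t (fun i => (y i == m)%:R)); ring.
  rewrite -mulr_sumr -mulr_sumr /cond_law.
  by case: eqP => _; rewrite ?mul1r ?mul0r.
have muP : \sum_(j < N) P n j * mu j 0 = mu n 0.
  by have := congr1 (fun M : 'cV[R]_N => M n 0) hPmu; rewrite /= mxE.
have Gt : forall s, \sum_(j < N) G s t j = mu m 0 * (if t == s then P n m else 1).
  move=> s; rewrite (bigD1 m) //= big1 ?addr0.
    by rewrite /G !eqxx mulr1; case: eqP.
  by move=> j /negbTE hj; rewrite /G eqxx hj mulr0.
have Gs : forall s, s != t -> \sum_(j < N) G s s j = mu n 0.
  move=> s /negbTE hst; rewrite /G eqxx hst -muP; apply: eq_bigr => j _.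
  by rewrite mulr1 mulrC.
have Go : forall s i, i != s -> i != t -> \sum_(j < N) G s i j = 1.
  move=> s i /negbTE h1 /negbTE h2; rewrite /G h1 h2 -[RHS]hmu.2.
  by apply: eq_bigr => j _; rewrite !mulr1.
rewrite E1 (bigD1 t) //= (bigD1 t) //= Gt eqxx big1; last first.
  by move=> i hi; rewrite Go.
rewrite (eq_bigr (fun s => q k s * (mu n 0 * mu m 0))); last first.
  move=> s hs; rewrite (bigD1 t) //= Gt (bigD1 s) /=; last exact hs.
  have hts : (t == s) = false by rewrite eq_sym; apply/negbTE.
  rewrite (Gs s hs) hts big1 ?mulr1; first by ring.
  by move=> i /andP [hit his]; rewrite Go.
rewrite -mulr_suml.
have hs : \sum_(s < T | s != t) q k s = 1 - q k t.
  by rewrite -(hq k).2 [in RHS](bigD1 t) //=; ring.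
rewrite hs mulr1; ring.
Qed.
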